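(* Let $G$ be a finite group with $Z(G)=1$, let $H\subseteq G$ be an abelian subgroup, let $\omega$ be a 2-cocycle on $\widehat H$, and let $A=(kG)^J$ where $J=\sum_{\alpha,\beta\in\widehat H}\omega(\alpha,\beta)e_\alpha\otimes e_\beta$. Let $\eta\in\widehat G=G(A^* )$. Then $\eta\in G(A^* )\cap Z(A^* )$ if and only if the restriction $\eta|_H\in\widehat H$ is $\omega$-regular, i.e. $\omega(\chi,\eta|_H)=\omega(\eta|_H,\chi)$ for all $\chi\in\widehat H$. If moreover $\omega$ is non-degenerate, then $\eta\in G(A^* )\cap Z(A^* )$ if and only if $\eta|_H=1$.
   Context: $k$ is an algebraically closed field of characteristic zero. A twist in a finite dimensional Hopf algebra $A$ is an invertible $J\in A\otimes A$ with $(\Delta\otimes \mathrm{id})(J)(J\otimes 1)=(\mathrm{id}\otimes\Delta)(J)(1\otimes J)$ and $(\epsilon\otimes\mathrm{id})(J)=(\mathrm{id}\otimes\epsilon)(J)=1$; $A^J$ denotes the Hopf algebra with the same algebra structure and counit as $A$, comultiplication $\Delta^J(h)=J^{-1}\Delta(h)J$, and antipode $S^J(h)=v^{-1}S(h)v$, $v=m(S\otimes\mathrm{id})(J)$. For an abelian subgroup $H$ of a finite group $G$, $\widehat H$ is its group of characters $H\to k^*$, and for $\chi\in\widehat H$, $e_\chi=\frac{1}{|H|}\sum_{h\in H}\chi(h^{-1})h\in kH\subseteq kG$. For a 2-cocycle $\omega:\widehat H\times\widehat H\to k^*$, $J=\sum_{\alpha,\beta\in\widehat H}\omega(\alpha,\beta)e_\alpha\otimes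 e_\beta$ is a twist in $kG$ (the twist lifted from $H$ associated with $\omega$). An element $\chi\in\widehat H$ is $\omega$-regular if $\omega(\chi,\psi)=\omega(\psi,\chi)$ for all $\psi\in\widehat H$; $\omega$ is non-degenerate if the trivial character is the only $\omega$-regular element. For $A=(kG)^J$, $G(A^* )$ (group-likes of the dual) equals $\widehat G$, the group of linear characters $G\to k^*$; $Z(\cdot)$ denotes the center. *)

(* Defs.v *)
From HB Require Import structures.
From mathcomp Require Import all_boot all_order all_algebra all_fingroup all_solvable.
Set Implicit Arguments. Unset Strict Implicit. Unset Printing Implicit Defensive.
Import GRing.Theory.
Local Open Scope ring_scope.

(* Group algebra kG of a finite group gT (the whole finGroupType), elements
   encoded by their coefficient functions: a = \sum_g a g * g. *)
Notation KG k gT := {ffun gT -> k} (only parsing).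
(* kG (x) kG, encoded by coefficients on the basis g (x) h. *)
Notation KG2 k gT := {ffun (gT * gT)%type -> k} (only parsing).

Section GroupAlgebra.
Variables (k : fieldType) (gT : finGroupType).

(* multiplication in kG (x) kG (componentwise group multiplication) *)
Definition mul2 (a b : KG2 k gT) : KG2 k gT :=
  [ffun p : gT * gT => \sum_(q : gT * gT)
      a q * b (((q.1)^-1 * p.1)%g, ((q.2)^-1 * p.2)%g)].

Definition one2 : KG2 k gT := [ffun p : gT * gT => if (p.1 == 1%g) && (p.2 == 1%g) then 1 else 0].

Definition tens (a b : KG k gT) : KG2 k gT := [ffun p : gT * gT => a p.1 * b p.2].

Definition delta (g : gT) : KG k gT := [ffun x => if x == g then 1 else 0].
Definition Delta (g : gT) : KG2 k gT := tens (delta g) (delta g).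

(* characters of a subgroup H, encoded as functions gT -> k vanishing off H *)
Definition is_char (H : {set gT}) (chi : {ffun gT -> k}) : Prop :=
  [/\ forall g, g \notin H -> chi g = 0,
      chi 1%g = 1 &
      {in H &, forall x y, chi (x * y)%g = chi x * chi y}].

Definition chi_mul (a b : {ffun gT -> k}) : {ffun gT -> k} := [ffun g => a g * b g].

Definition chi_one (H : {set gT}) : {ffun gT -> k} :=
  [ffun g => if g \in H then 1 else 0].

Definition restr (H : {set gT}) (eta : gT -> k) : {ffun gT -> k} :=
  [ffun g => if g \in H then eta g else 0].

(* linear characters of G (= group-likes of A^* ) *)
Definition is_lin_char (eta : gT -> k) : Prop :=
  eta 1%g = 1 /\ forall x y, eta (x * y)%g = eta x * eta y.

Definition e_chi (H : {set gT}) (chi : {ffun gT -> k}) : KG k gT :=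
  [ffun g => if g \in H then (#|H|%:R)^-1 * chi (g^-1)%g else 0].

(* 2-cocycle on \hat H with values in k^*, hatH an enumeration of \hat H *)
Definition two_cocycle (hatH : seq {ffun gT -> k})
    (omega : {ffun gT -> k} -> {ffun gT -> k} -> k) : Prop :=
  (forall a b, a \in hatH -> b \in hatH -> omega a b != 0) /\
  (forall a b c, a \in hatH -> b \in hatH -> c \in hatH ->
     omega a b * omega (chi_mul a b) c = omega b c * omega a (chi_mul b c)).

Definition twistJ (H : {set gT}) (hatH : seq {ffun gT -> k})
    (omega : {ffun gT -> k} -> {ffun gT -> k} -> k) : KG2 k gT :=
  [ffun p : gT * gT => \sum_(a <- hatH) \sum_(b <- hatH)
      omega a b * tens (e_chi H a) (e_chi H b) p].

Definition DeltaJ (J Jinv : KG2 k gT) (g : gT) : KG2 k gT :=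
  mul2 Jinv (mul2 (Delta g) J).

(* multiplication of A^* = (kG^J)^*, dual to Delta^J:
   (f * f')(g) = <f (x) f', Delta^J(g)> *)
Definition dual_mul (J Jinv : KG2 k gT) (f f' : gT -> k) : gT -> k :=
  fun g => \sum_(p : gT * gT) DeltaJ J Jinv g p * (f p.1 * f' p.2).

Definition central_dual (J Jinv : KG2 k gT) (eta : gT -> k) : Prop :=
  forall f : gT -> k, dual_mul J Jinv eta f =1 dual_mul J Jinv f eta.

Definition omega_regular (hatH : seq {ffun gT -> k})
    (omega : {ffun gT -> k} -> {ffun gT -> k} -> k) (chi : {ffun gT -> k}) : Prop :=
  forall psi, psi \in hatH -> omega chi psi = omega psi chi.

Definition omega_nondegenerate (H : {set gT}) (hatH : seq {ffun gT -> k})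
    (omega : {ffun gT -> k} -> {ffun gT -> k} -> k) : Prop :=
  forall chi, chi \in hatH -> omega_regular hatH omega chi -> chi = chi_one H.

End GroupAlgebra.

(* Main.v *)
Require Import Defs.
From HB Require Import structures.
From mathcomp Require Import all_boot all_order all_algebra all_fingroup all_solvable.
From mathcomp Require Import all_field all_character.
From mathcomp Require Import ring.
Set Implicit Arguments. Unset Strict Implicit. Unset Printing Implicit Defensive.
Import GRing.Theory Num.Theory.
Local Open Scope ring_scope.

Lemma prim_root_k (k : closedFieldType) n : [pchar k] =i pred0 -> (n > 0)%N ->
  exists z : k, n.-primitive_root z.
Proof.
move=> ch n_gt0.
pose p : {poly k} := 'X^n - 1; have [r Dp] := closed_field_poly_normal p.
rewrite (monicP _) ?monicXnsubC // scale1r in Dp.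
have rn1: all n.-unity_root r by apply/allP=> z; rewrite -root_prod_XsubC -Dp.
have sz_r: (n < (size r).+1)%N.
  by rewrite -(size_prod_XsubC r id) -Dp size_XnsubC.
have [|z] := hasP (has_prim_root n_gt0 rn1 _ sz_r); last by exists z.
rewrite -separable_prod_XsubC -Dp separable_Xn_sub_1 //.
by move/pcharf0P: ch => ->; rewrite -lt0n.
Qed.


Lemma sep_char (k : closedFieldType) (gT : finGroupType) (H : {group gT}) :
  [pchar k] =i pred0 -> abelian H -> forall z, z \in H -> z != 1%g ->
  exists gam : {ffun gT -> k}, is_char H gam /\ gam z != 1.
Proof.
move=> ch cHH z Hz nz1.
have n_gt0 := cardG_gt0 H; set n := #|H| in n_gt0.
have [zk pk] := @prim_root_k k n ch n_gt0.
have [zC pC] := C_prim_root_exists n_gt0.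
have [i chiz] : exists i : Iirr H, 'chi_i z != 1.
  apply/existsP; apply: contraT; rewrite negb_exists => /forallP all1.
  have := cfRegE H z; rewrite (negbTE nz1) mulr0n cfReg_sum sum_cfunE.
  under eq_bigr => j _ do rewrite cfunE (lin_char1 (char_abelianP _ cHH j)) mul1r
     (eqP (negbNE (all1 j))).
  rewrite sumr_const card_Iirr_abelian // => /eqP.
  rewrite pnatr_eq0; rewrite eqn0Ngt; rewrite cardG_gt0 //.
have lin := char_abelianP _ cHH i; set xi := 'chi_i in chiz lin.
have xin h : h \in H -> xi h ^+ n = 1.
  by move=> Hh; rewrite -lin_charX // expg_cardG // lin_char1.
pose e h := odflt (Ordinal n_gt0) [pick j : 'I_n | xi h == zC ^+ j].
have eP h : h \in H -> xi h = zC ^+ e h.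
  move=> Hh; rewrite /e; case: pickP => [j /eqP //|/= none].
  by have [j Ej] := prim_rootP pC (xin h Hh); have := none j; rewrite Ej eqxx.
exists [ffun h => if h \in H then zk ^+ e h else 0]; split; last first.
  rewrite ffunE Hz; apply: contra chiz => /eqP.
  rewrite -(expr0 zk) => /eqP; rewrite (eq_prim_root_expr pk) => E.
  by rewrite eP // -(expr0 zC); rewrite (eq_prim_root_expr pC).
split.
- by move=> g /negbTE Hg; rewrite ffunE Hg.
- rewrite ffunE group1 -(expr0 zk); apply/eqP; rewrite (eq_prim_root_expr pk).
  by rewrite -(eq_prim_root_expr pC) -eP // expr0 lin_char1.
- move=> x y Hx Hy; rewrite !ffunE groupM // Hx Hy -exprD.
  apply/eqP; rewrite (eq_prim_root_expr pk) -(eq_prim_root_expr pC).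
  by rewrite exprD -!eP ?groupM // lin_charM.
Qed.


Section Conv.
Variables (k : fieldType) (gT : finGroupType).
Implicit Types a b c : {ffun gT -> k}.

Definition conv a b : {ffun gT -> k} :=
  [ffun y => \sum_z a z * b (z^-1 * y)%g].

Lemma conv_dl g a : conv (delta k g) a = [ffun y => a (g^-1 * y)%g].
Proof.
apply/ffunP=> y; rewrite /delta !ffunE (bigD1 g) //= ffunE eqxx mul1r big1 ?addr0 //.
by move=> z /negbTE nz; rewrite ffunE nz mul0r.
Qed.

Lemma conv_dr a g : conv a (delta k g) = [ffun y => a (y * g^-1)%g].
Proof.
apply/ffunP=> y; rewrite /delta !ffunE (bigD1 (y * g^-1)%g) //= ffunE invMg invgK mulgKV eqxx mulr1 big1 ?addr0 //.
move=> z nz; rewrite ffunE; case: eqP => [E|]; last by rewrite mulr0.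
by case/eqP: nz; rewrite -E invMg invgK mulKVg.
Qed.

Lemma conv1l a : conv (delta k 1) a = a.
Proof. by rewrite conv_dl; apply/ffunP=> y; rewrite ffunE invg1 mul1g. Qed.

Lemma conv1r a : conv a (delta k 1) = a.
Proof. by rewrite conv_dr; apply/ffunP=> y; rewrite ffunE invg1 mulg1. Qed.

Lemma convA a b c : conv (conv a b) c = conv a (conv b c).
Proof.
apply/ffunP=> y; rewrite !ffunE.
under eq_bigr => z _ do rewrite ffunE mulr_suml.
rewrite exchange_big /=; apply: eq_bigr => w _.
rewrite ffunE mulr_sumr (reindex_inj (mulgI w)) /=.
by apply: eq_bigr => z _; rewrite mulKg invMg mulgA mulrA.
Qed.

Definition phiL (eta : gT -> k) (a : {ffun (gT * gT)%type -> k}) : {ffun gT -> k} :=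
  [ffun y => \sum_x a (x, y) * eta x].
Definition phiR (eta : gT -> k) (a : {ffun (gT * gT)%type -> k}) : {ffun gT -> k} :=
  [ffun x => \sum_y a (x, y) * eta y].

Lemma sum_pair (F : gT * gT -> k) : \sum_q F q = \sum_q1 \sum_q2 F (q1, q2).
Proof. by rewrite pair_bigA; apply: eq_bigr => -[]. Qed.

Lemma phiL_mul eta (a b : {ffun (gT * gT)%type -> k}) : is_lin_char eta ->
  phiL eta (mul2 a b) = conv (phiL eta a) (phiL eta b).
Proof.
move=> [eta1 etaM]; apply/ffunP=> y; rewrite !ffunE.
under eq_bigr => x _ do rewrite ffunE sum_pair mulr_suml.
rewrite exchange_big /=.
under eq_bigr => j _ do under eq_bigr => i _ do rewrite mulr_suml.
under eq_bigr => j _ do rewrite exchange_big /=.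
rewrite exchange_big /=; apply: eq_bigr => z _; rewrite !ffunE mulr_suml.
apply: eq_bigr => x1 _; rewrite mulr_sumr (reindex_inj (mulgI x1)) /=.
apply: eq_bigr => x2 _; rewrite mulKg etaM /=; ring.
Qed.

Lemma phiR_mul eta (a b : {ffun (gT * gT)%type -> k}) : is_lin_char eta ->
  phiR eta (mul2 a b) = conv (phiR eta a) (phiR eta b).
Proof.
move=> [eta1 etaM]; apply/ffunP=> x; rewrite !ffunE.
under eq_bigr => y _ do rewrite ffunE sum_pair mulr_suml.
under eq_bigr => j _ do under eq_bigr => i _ do rewrite mulr_suml.
rewrite exchange_big /=; apply: eq_bigr => z _; rewrite !ffunE mulr_suml.
rewrite exchange_big /=; apply: eq_bigr => y1 _; rewrite mulr_sumr (reindex_inj (mulgI y1)) /=.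
apply: eq_bigr => y2 _; rewrite mulKg etaM /=; ring.
Qed.

Lemma phiL_one eta : is_lin_char eta -> phiL eta (one2 k gT) = delta k 1.
Proof.
move=> [eta1 _]; apply/ffunP=> y; rewrite /delta !ffunE (bigD1 1%g) //= big1.
  by rewrite ffunE /= eqxx /=; case: (y == 1%g); rewrite ?eta1 ?mul1r ?mul0r addr0.
by move=> x /negbTE nx; rewrite ffunE /= nx mul0r.
Qed.

Lemma phiR_one eta : is_lin_char eta -> phiR eta (one2 k gT) = delta k 1.
Proof.
move=> [eta1 _]; apply/ffunP=> x; rewrite /delta !ffunE (bigD1 1%g) //= big1.
  by rewrite ffunE /= eqxx andbT; case: (x == 1%g); rewrite ?eta1 ?mul1r ?mul0r addr0.
by move=> y /negbTE ny; rewrite ffunE /= ny andbF mul0r.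
Qed.

Lemma phiL_Delta eta g : phiL eta (Delta k g) = [ffun y => eta g * delta k g y].
Proof.
apply/ffunP=> y; rewrite /Delta /tens /delta !ffunE (bigD1 g) //= big1.
  by rewrite ffunE /= !ffunE eqxx mul1r addr0 mulrC.
by move=> x /negbTE nx; rewrite ffunE /= !ffunE nx !mul0r.
Qed.

Lemma phiR_Delta eta g : phiR eta (Delta k g) = [ffun y => eta g * delta k g y].
Proof.
apply/ffunP=> x; rewrite /Delta /tens /delta !ffunE (bigD1 g) //= big1.
  by rewrite ffunE /= !ffunE eqxx mulr1 addr0 mulrC.
by move=> y /negbTE ny; rewrite ffunE /= !ffunE ny mulr0 mul0r.
Qed.

Lemma dualL J Jinv eta f g : dual_mul J Jinv eta f g =
  \sum_y phiL eta (DeltaJ J Jinv g) y * f y.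
Proof.
rewrite /dual_mul sum_pair exchange_big /=; apply: eq_bigr => y _.
by rewrite ffunE mulr_suml; apply: eq_bigr => x _; rewrite mulrA.
Qed.

Lemma dualR J Jinv eta f g : dual_mul J Jinv f eta g =
  \sum_x phiR eta (DeltaJ J Jinv g) x * f x.
Proof.
rewrite /dual_mul sum_pair; apply: eq_bigr => x _.
by rewrite ffunE mulr_suml; apply: eq_bigr => y _; rewrite /=; ring.
Qed.

End Conv.


Lemma sum_const_seq (k : fieldType) (T : Type) (s : seq T) (x : k) :
  \sum_(b <- s) x = x *+ size s.
Proof. by elim: s => [|a s IH]; rewrite ?big_nil ?big_cons ?IH ?mulrS. Qed.

Section Chars.
Variables (k : fieldType) (gT : finGroupType) (H : {group gT}).
Variable hatH : seq {ffun gT -> k}.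
Hypothesis ch0 : [pchar k] =i pred0.
Hypothesis hatHP : forall chi, chi \in hatH <-> is_char H chi.
Hypothesis uH : uniq hatH.
Implicit Types a b : {ffun gT -> k}.

Local Notation hN := ((#|H|%:R : k)^-1).
Local Notation e := (e_chi H).
Definition chi_inv (b : {ffun gT -> k}) : {ffun gT -> k} := [ffun g => b (g^-1)%g].

Lemma nH0 : (#|H|%:R : k) != 0.
Proof. by move/pcharf0P: ch0 => ->; rewrite -lt0n cardG_gt0. Qed.

Lemma hNK : hN * #|H|%:R = 1.
Proof. by rewrite mulVf // nH0. Qed.

Lemma char_out b g : is_char H b -> g \notin H -> b g = 0.
Proof. by case=> + _ _; apply. Qed.

Lemma char_inv b h : is_char H b -> h \in H -> b (h^-1)%g * b h = 1.
Proof. by case=> _ b1 bM Hh; rewrite -bM ?groupV // mulVg b1. Qed.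

Lemma char_nz b h : is_char H b -> h \in H -> b h != 0.
Proof. by move=> cb Hh; apply/eqP=> E; have := char_inv cb Hh; rewrite E mulr0 => /eqP; rewrite eq_sym oner_eq0. Qed.

Lemma orth1 a b : is_char H a -> is_char H b ->
  \sum_x a (x^-1)%g * b x = if a == b then #|H|%:R else 0.
Proof.
move=> ca cb; case: eqP => [<-|neq].
  transitivity (\sum_(x in H) (1 : k)); last by rewrite sumr_const.
  rewrite [RHS]big_mkcond; apply: eq_bigr => x _; case: ifP => Hx.
    by rewrite char_inv.
  by rewrite (char_out ca (negbT Hx)) mulr0.
have /existsP[g ng] : [exists g, a g != b g].
  apply: contraT; rewrite negb_exists => /forallP E; case: neq.
  by apply/ffunP => g; apply/eqP/negPn/E.
have Hg : g \in H.
  by apply: contraR ng => Hg; rewrite (char_out ca Hg) (char_out cb Hg).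
set S := \sum_x _.
have ES : S = a (g^-1)%g * b g * S.
  rewrite {1}/S (reindex_inj (mulgI g)) /= /S mulr_sumr; apply: eq_bigr => x _.
  case: (boolP (x \in H)) => Hx.
    case: ca => _ _ aM; case: cb => _ _ bM.
    by rewrite invMg (aM _ _ (groupVr Hx) (groupVr Hg)) (bM _ _ Hg Hx); ring.
  have Hgx : (g * x)%g \notin H by rewrite groupMl.
  by rewrite (char_out cb Hgx) (char_out cb Hx) !mulr0.
have c1 : a (g^-1)%g * b g != 1.
  apply: contra ng => /eqP E; apply/eqP.
  by rewrite -[a g]mulr1 -E mulrA (mulrC (a g)) char_inv // mul1r.
apply/eqP; move: ES => /eqP; rewrite -subr_eq0 -{1}[S]mul1r -mulrBl mulf_eq0.
by rewrite subr_eq0 eq_sym (negbTE c1).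
Qed.

Lemma eE b y : e b y = if y \in H then hN * b (y^-1)%g else 0.
Proof. by rewrite ffunE. Qed.

Lemma e_out b y : y \notin H -> e b y = 0.
Proof. by rewrite eE => /negbTE ->. Qed.

Lemma restr_char (eta : gT -> k) : is_lin_char eta -> is_char H (restr H eta).
Proof.
case=> eta1 etaM; split.
- by move=> g /negbTE Hg; rewrite ffunE Hg.
- by rewrite ffunE group1.
- by move=> x y Hx Hy; rewrite !ffunE groupM // Hx Hy etaM.
Qed.

Lemma eeta a (eta : gT -> k) : is_char H a -> is_lin_char eta ->
  \sum_x e a x * eta x = if a == restr H eta then 1 else 0.
Proof.
move=> ca leta; transitivity (hN * \sum_x a (x^-1)%g * restr H eta x).
  rewrite mulr_sumr; apply: eq_bigr => x _; rewrite eE ffunE.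
  by case: ifP => _; rewrite ?mul0r ?mulr0 // mulrA.
by rewrite (orth1 ca (restr_char leta)); case: ifP; rewrite ?mulr0 ?hNK.
Qed.

Lemma conv_e a b y : is_char H a -> is_char H b ->
  conv (e a) (e b) y = if a == b then e b y else 0.
Proof.
move=> ca cb; rewrite ffunE; case: (boolP (y \in H)) => Hy; last first.
  rewrite big1 ?e_out ?if_same // => z _; case: (boolP (z \in H)) => Hz.
    by rewrite (e_out b) ?mulr0 // groupMl ?groupV.
  by rewrite e_out ?mul0r.
transitivity (hN * hN * b (y^-1)%g * \sum_z a (z^-1)%g * b z).
  rewrite mulr_sumr; apply: eq_bigr => z _; rewrite !eE.
  case: (boolP (z \in H)) => Hz; last by rewrite (char_out cb Hz) !mul0r !mulr0.
  rewrite groupMl ?groupV // Hy invMg invgK.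
  by case: cb => _ _ bM; rewrite bM ?groupV //; ring.
rewrite orth1 //; case: ifP => _; rewrite ?mulr0 // eE Hy. field. exact: nH0.
Qed.

Lemma chi_mul_char a b : is_char H a -> is_char H b -> is_char H (chi_mul a b).
Proof.
move=> [a0 a1 aM] [b0 b1 bM]; split.
- by move=> g Hg; rewrite ffunE a0 ?mul0r.
- by rewrite ffunE a1 b1 mulr1.
- by move=> x y Hx Hy; rewrite !ffunE aM ?bM //; ring.
Qed.

Lemma chi_inv_char a : is_char H a -> is_char H (chi_inv a).
Proof.
move=> [a0 a1 aM]; split.
- by move=> g Hg; rewrite ffunE a0 ?groupV.
- by rewrite ffunE invg1.
- by move=> x y Hx Hy; rewrite !ffunE invMg aM ?groupV // mulrC.
Qed.

Lemma chi_mul_invK a b : is_char H a -> is_char H b ->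
  chi_mul (chi_mul a (chi_inv b)) b = a.
Proof.
move=> ca cb; apply/ffunP=> g; rewrite !ffunE.
case: (boolP (g \in H)) => Hg; last by rewrite (char_out ca Hg) !mul0r.
by rewrite -mulrA char_inv // mulr1.
Qed.

Lemma chi_one_char : is_char H (chi_one k H).
Proof.
split.
- by move=> g /negbTE Hg; rewrite ffunE Hg.
- by rewrite ffunE group1.
- by move=> x y Hx Hy; rewrite !ffunE groupM // Hx Hy mulr1.
Qed.

Lemma perm_mul g : g \in hatH -> perm_eq hatH (map (fun b => chi_mul b g) hatH).
Proof.
move=> /hatHP cg.
have inj : {in hatH &, injective (fun b => chi_mul b g)}.
  move=> a b /hatHP ca /hatHP cb /ffunP E; apply/ffunP => x.
  have := E x; rewrite !ffunE; case: (boolP (x \in H)) => Hx.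
    by move/mulIf; apply; rewrite char_nz.
  by rewrite (char_out ca Hx) (char_out cb Hx).
have Um : uniq (map (fun b => chi_mul b g) hatH) by rewrite map_inj_in_uniq.
have sub : {subset map (fun b => chi_mul b g) hatH <= hatH}.
  by move=> x /mapP[a /hatHP ca ->]; apply/hatHP/chi_mul_char.
have [_ E] := uniq_min_size Um sub (eq_leq (esym (size_map _ _))).
by apply: uniq_perm => // x; rewrite E.
Qed.

Lemma sum_reindex (F : {ffun gT -> k} -> k) g : g \in hatH ->
  \sum_(b <- hatH) F b = \sum_(b <- hatH) F (chi_mul b g).
Proof. by move=> hg; rewrite (perm_big _ (perm_mul hg)) big_map. Qed.

Lemma e1 b : is_char H b -> e b 1%g = hN.
Proof. by case=> _ b1 _; rewrite eE group1 invg1 b1 mulr1. Qed.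

Lemma e_nz b : is_char H b -> e b != 0.
Proof.
move=> cb; apply/eqP => /ffunP /(_ 1%g); rewrite e1 // ffunE => /eqP.
by rewrite invr_eq0 (negbTE nH0).
Qed.

End Chars.


Section Closed.
Variables (k : closedFieldType) (gT : finGroupType) (H : {group gT}).
Variable hatH : seq {ffun gT -> k}.
Hypothesis ch0 : [pchar k] =i pred0.
Hypothesis hatHP : forall chi, chi \in hatH <-> is_char H chi.
Hypothesis uH : uniq hatH.
Hypothesis cHH : abelian H.
Implicit Types a b : {ffun gT -> k}.

Local Notation hN := ((#|H|%:R : k)^-1).
Local Notation e := (e_chi H).

Lemma sumchi z : z \in H -> z != 1%g -> \sum_(b <- hatH) b z = 0.
Proof.
move=> Hz nz; have [g [cg gz]] := @sep_char k gT H ch0 cHH z Hz nz.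
have hg : g \in hatH by apply/hatHP.
set S := \sum_(b <- _) _.
have ES : S = g z * S.
  rewrite {1}/S (@sum_reindex _ _ H hatH hatHP uH (fun b => b z) g hg) /S mulr_sumr.
  by apply: eq_bigr => b _; rewrite ffunE mulrC.
apply/eqP; move: ES => /eqP; rewrite -subr_eq0 -{1}[S]mul1r -mulrBl mulf_eq0.
by rewrite subr_eq0 eq_sym (negbTE gz).
Qed.

Lemma Esum y : \sum_(b <- hatH) e b y = if y == 1%g then 1 else 0.
Proof.
set c := \sum_(b <- hatH) e b 1%g.
have A z : \sum_(b <- hatH) e b z = if z == 1%g then c else 0.
  case: eqP => [->//|nz].
  case: (boolP (z \in H)) => Hz; last by rewrite big1_seq // => b _; rewrite e_out.
  under eq_big_seq => b hb do rewrite eE Hz.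
  by rewrite -mulr_sumr sumchi ?mulr0 ?groupV // eq_invg1; apply/eqP.
have c0 : c != 0.
  have -> : c = \sum_(b <- hatH) hN.
    by apply: eq_big_seq => b /hatHP cb; rewrite e1.
  rewrite sum_const_seq -(mulr_natr hN); apply: mulf_neq0; first by rewrite invr_eq0 (nH0 H ch0).
  have X : chi_one k H \in hatH by apply/hatHP/(@chi_one_char k gT H).
  move/pcharf0P: ch0 => ->; apply: contraTneq X => /size0nil ->.
  by rewrite in_nil.
have cc : c * c = c.
  transitivity (\sum_z (\sum_(a <- hatH) e a z) * (\sum_(b <- hatH) e b (z^-1 * 1)%g)).
    rewrite (bigD1 1%g) //= !A invg1 mulg1 eqxx.
    have -> : \sum_(z | z != 1%g) (\sum_(a <- hatH) e a z) * (\sum_(b <- hatH) e b (z^-1 * 1)%g) = 0.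
      by apply: big1 => z /negbTE nz; rewrite A nz mul0r.
    by rewrite addr0.
  under eq_bigr => z _ do rewrite big_distrlr /=.
  rewrite exchange_big /=; apply: eq_big_seq => a ha.
  rewrite exchange_big /= (bigD1_seq a) //= [X in _ + X]big1_seq.
    rewrite addr0; have := conv_e ch0 1%g (proj1 (hatHP a) ha) (proj1 (hatHP a) ha).
    by rewrite ffunE eqxx.
  move=> b /andP[nb hb]; have := conv_e ch0 1%g (proj1 (hatHP a) ha) (proj1 (hatHP b) hb).
  by rewrite ffunE eq_sym (negbTE nb).
have c1 : c = 1.
  by apply/eqP; move/eqP: cc; rewrite -subr_eq0 -{3}[c]mulr1 -mulrBr mulf_eq0 (negbTE c0) subr_eq0.
by rewrite A c1.
Qed.

Lemma S2 z : z \in H -> \sum_(b <- hatH) b z = if z == 1%g then #|H|%:R else 0.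
Proof.
move=> Hz; have := Esum (z^-1)%g.
under eq_big_seq => b hb do rewrite eE groupV Hz invgK.
rewrite -mulr_sumr eq_invg1 => E.
apply: (mulfI (invr_neq0 (nH0 H ch0))); rewrite E; case: eqP => _; rewrite ?mulr0 // mulVf //; exact: (nH0 H ch0).
Qed.

Lemma GL (lam : {ffun gT -> k} -> k) :
  (forall a b, a \in hatH -> b \in hatH -> lam (chi_mul a b) = lam a * lam b) ->
  forall x y,
  (\sum_(b <- hatH) lam b * e b x) * (\sum_(b <- hatH) lam b * e b y) =
  if x == y then \sum_(b <- hatH) lam b * e b x else 0.
Proof.
move=> lamM x y.
have W0 z : z \notin H -> \sum_(b <- hatH) lam b * e b z = 0.
  by move=> Hz; rewrite big1_seq // => b _; rewrite e_out ?mulr0.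
case: (boolP (x \in H)) => Hx; last by rewrite W0 // mul0r if_same.
case: (boolP (y \in H)) => Hy; last first.
  rewrite (W0 y) // mulr0; case: eqP => // exy; rewrite exy W0 //.
rewrite big_distrlr /= exchange_big /=.
transitivity (\sum_(g <- hatH) \sum_(b <- hatH)
   (lam b * e b x) * (hN * g (x * y^-1)%g)).
  apply: eq_big_seq => g hg.
  have cg := proj1 (hatHP g) hg.
  have hgi : chi_inv g \in hatH by apply/hatHP/chi_inv_char.
  rewrite (@sum_reindex _ _ H hatH hatHP uH _ (chi_inv g) hgi).
  apply: eq_big_seq => b hb; have cb := proj1 (hatHP b) hb.
  have hbg : chi_mul b (chi_inv g) \in hatH by apply/hatHP/chi_mul_char => //; apply: chi_inv_char.
  rewrite -{3}(chi_mul_invK cb cg) (lamM _ _ hbg hg) !eE Hx Hy !ffunE invgK.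
  case: cg => _ _ gM; rewrite gM ?groupV //; ring.
transitivity (\sum_(g <- hatH) (\sum_(b <- hatH) lam b * e b x) * (hN * g (x * y^-1)%g)).
  by apply: eq_bigr => g _; rewrite mulr_suml.
rewrite -mulr_sumr -mulr_sumr S2 ?groupM ?groupV // -eq_mulgV1.
by case: eqP => _; rewrite ?mulr0 // (hNK H ch0) mulr1.
Qed.

End Closed.


Section More.
Variables (k : fieldType) (gT : finGroupType).
Implicit Types a b : {ffun gT -> k}.

Lemma conv_scl (c : k) a b : conv [ffun y => c * a y] b = [ffun y => c * conv a b y].
Proof.
apply/ffunP=> y; rewrite !ffunE mulr_sumr; apply: eq_bigr => z _.
by rewrite ffunE mulrA.
Qed.

Lemma conv_scr (c : k) a b : conv a [ffun y => c * b y] = [ffun y => c * conv a b y].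
Proof.
apply/ffunP=> y; rewrite !ffunE mulr_sumr; apply: eq_bigr => z _.
by rewrite ffunE mulrCA.
Qed.

Lemma conv_sumr (I : Type) (s : seq I) (F : I -> {ffun gT -> k}) a :
  conv a [ffun y => \sum_(i <- s) F i y] = [ffun y => \sum_(i <- s) conv a (F i) y].
Proof.
apply/ffunP=> y; rewrite !ffunE.
under eq_bigr => z _ do rewrite ffunE mulr_sumr.
rewrite exchange_big /=; apply: eq_bigr => i _; by rewrite ffunE.
Qed.

Lemma conv_suml (I : Type) (s : seq I) (F : I -> {ffun gT -> k}) b :
  conv [ffun y => \sum_(i <- s) F i y] b = [ffun y => \sum_(i <- s) conv (F i) b y].
Proof.
apply/ffunP=> y; rewrite !ffunE.
under eq_bigr => z _ do rewrite ffunE mulr_suml.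
rewrite exchange_big /=; apply: eq_bigr => i _; by rewrite ffunE.
Qed.

Lemma sum_delta (F : gT -> k) y : \sum_x F x * (if x == y then 1 else 0) = F y.
Proof.
rewrite (bigD1 y) //= eqxx mulr1 big1 ?addr0 //.
by move=> x /negbTE ->; rewrite mulr0.
Qed.

Lemma chi_mulC a b : chi_mul a b = chi_mul b a.
Proof. by apply/ffunP=> x; rewrite !ffunE mulrC. Qed.

Lemma chi_mul1 (H : {group gT}) a : is_char H a -> chi_mul (chi_one k H) a = a.
Proof.
move=> ca; apply/ffunP=> x; rewrite !ffunE.
by case: ifP => [_|/negbT Hx]; rewrite ?mul1r // (char_out ca Hx) mul0r.
Qed.

Section Cocycle.
Variables (H : {group gT}) (hatH : seq {ffun gT -> k}).
Variable omega : {ffun gT -> k} -> {ffun gT -> k} -> k.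
Hypothesis hatHP : forall chi, chi \in hatH <-> is_char H chi.
Hypothesis coc : two_cocycle hatH omega.

Lemma one_in : chi_one k H \in hatH.
Proof. exact/hatHP/(@chi_one_char k gT H). Qed.

Lemma omega_norm a : a \in hatH -> omega (chi_one k H) a = omega a (chi_one k H).
Proof.
move=> ha; have ca := proj1 (hatHP a) ha; have o1 := one_in.
case: coc => nz cc.
have c1 := @chi_one_char k gT H.
have E1 := cc _ _ _ o1 o1 ha; rewrite (chi_mul1 c1) (chi_mul1 ca) in E1.
have E2 := cc _ _ _ ha o1 o1; rewrite (chi_mulC a) (chi_mul1 ca) (chi_mul1 c1) in E2.
have A : omega (chi_one k H) (chi_one k H) = omega (chi_one k H) a.
  by apply: (mulIf (nz _ _ o1 ha)); rewrite E1.
have B : omega a (chi_one k H) = omega (chi_one k H) (chi_one k H).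
  by apply: (mulfI (nz _ _ ha o1)); rewrite E2 mulrC.
by rewrite -A B.
Qed.

Lemma lam_mul x y z : x \in hatH -> y \in hatH -> z \in hatH ->
  omega x (chi_mul y z) / omega (chi_mul y z) x =
  omega x y / omega y x * (omega x z / omega z x).
Proof.
move=> hx hy hz; case: coc => nz cc.
have cy := proj1 (hatHP y) hy; have cz := proj1 (hatHP z) hz; have cx := proj1 (hatHP x) hx.
have hyz : chi_mul y z \in hatH by apply/hatHP/chi_mul_char.
have c1 := cc _ _ _ hx hy hz.
have c2 := cc _ _ _ hy hz hx.
have c3 := cc _ _ _ hy hx hz.
rewrite (chi_mulC y x) (chi_mulC z x) in c2 c3.
rewrite mulf_div; apply/eqP; rewrite eqr_div ?mulf_neq0 ?nz //; apply/eqP.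
apply: (mulIf (nz _ _ hy hz)).
transitivity (omega x y * omega z x * (omega y x * omega (chi_mul x y) z)).
  transitivity (omega y z * omega x (chi_mul y z) * (omega y x * omega z x)); first by ring.
  rewrite -c1; ring.
rewrite c3.
transitivity (omega x y * omega x z * (omega y z * omega (chi_mul y z) x)); last by ring.
rewrite c2; ring.
Qed.

End Cocycle.
End More.


Section Main.
Variables (k : closedFieldType) (gT : finGroupType) (H : {group gT}).
Variable hatH : seq {ffun gT -> k}.
Variable omega : {ffun gT -> k} -> {ffun gT -> k} -> k.
Variables (Jinv : {ffun (gT * gT)%type -> k}) (eta : gT -> k).
Hypothesis ch0 : [pchar k] =i pred0.
Hypothesis cHH : abelian H.
Hypothesis uH : uniq hatH.
Hypothesis hatHP : forall chi, chi \in hatH <-> is_char H chi.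
Hypothesis coc : two_cocycle hatH omega.
Hypothesis JL : mul2 Jinv (twistJ H hatH omega) = one2 k gT.
Hypothesis JR : mul2 (twistJ H hatH omega) Jinv = one2 k gT.
Hypothesis leta : is_lin_char eta.

Local Notation J := (twistJ H hatH omega).
Local Notation etaH := (restr H eta).
Local Notation e := (e_chi H).

Lemma hetaH : etaH \in hatH.
Proof. exact/hatHP/restr_char. Qed.

Lemma phiLJ : phiL eta J = [ffun y => \sum_(b <- hatH) omega etaH b * e b y].
Proof.
apply/ffunP=> y; rewrite !ffunE.
under eq_bigr => x _ do rewrite ffunE mulr_suml.
rewrite exchange_big /=.
transitivity (\sum_(a <- hatH) \sum_(b <- hatH) omega a b * e b y * (if a == etaH then 1 else 0)).
  apply: eq_big_seq => a ha.
  under eq_bigr => x _ do rewrite mulr_suml.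
  rewrite exchange_big /=; apply: eq_bigr => b _.
  rewrite -(eeta ch0 (proj1 (hatHP a) ha) leta) mulr_sumr; apply: eq_bigr => x _.
  rewrite ffunE /=; ring.
rewrite (bigD1_seq etaH) ?hetaH //= eqxx [X in _ + X]big1_seq ?addr0.
  by apply: eq_bigr => b _; rewrite mulr1.
move=> a /andP[na _]; rewrite big1 // => b _; by rewrite (negbTE na) mulr0.
Qed.

Lemma phiRJ : phiR eta J = [ffun y => \sum_(b <- hatH) omega b etaH * e b y].
Proof.
apply/ffunP=> x; rewrite !ffunE.
under eq_bigr => y _ do rewrite ffunE mulr_suml.
rewrite exchange_big /=; apply: eq_big_seq => a ha.
transitivity (\sum_(b <- hatH) omega a b * e a x * (if b == etaH then 1 else 0)).
  under eq_bigr => y _ do rewrite mulr_suml.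
  rewrite exchange_big /=; apply: eq_big_seq => b hb.
  rewrite -(eeta ch0 (proj1 (hatHP b) hb) leta) mulr_sumr; apply: eq_bigr => y _.
  rewrite ffunE /=; ring.
rewrite (bigD1_seq etaH) ?hetaH //= eqxx [X in _ + X]big1_seq ?addr0.
  by rewrite mulr1.
move=> b /andP[nb _]; by rewrite (negbTE nb) mulr0.
Qed.

Lemma invL : conv (phiL eta Jinv) (phiL eta J) = delta k 1.
Proof. by rewrite -phiL_mul // JL phiL_one. Qed.
Lemma invL' : conv (phiL eta J) (phiL eta Jinv) = delta k 1.
Proof. by rewrite -phiL_mul // JR phiL_one. Qed.
Lemma invR : conv (phiR eta Jinv) (phiR eta J) = delta k 1.
Proof. by rewrite -phiR_mul // JL phiR_one. Qed.
Lemma invR' : conv (phiR eta J) (phiR eta Jinv) = delta k 1.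
Proof. by rewrite -phiR_mul // JR phiR_one. Qed.

Lemma DJL g : phiL eta (DeltaJ J Jinv g) =
  conv (phiL eta Jinv) (conv [ffun y => eta g * delta k g y] (phiL eta J)).
Proof. by rewrite /DeltaJ !phiL_mul // phiL_Delta. Qed.
Lemma DJR g : phiR eta (DeltaJ J Jinv g) =
  conv (phiR eta Jinv) (conv [ffun y => eta g * delta k g y] (phiR eta J)).
Proof. by rewrite /DeltaJ !phiR_mul // phiR_Delta. Qed.

Lemma central_iff : central_dual J Jinv eta <->
  forall g, phiL eta (DeltaJ J Jinv g) = phiR eta (DeltaJ J Jinv g).
Proof.
split=> [C g | E f g]; last by rewrite dualL dualR E.
apply/ffunP=> y; have := C (fun x => if x == y then 1 else 0) g.
by rewrite dualL dualR !sum_delta.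
Qed.

Lemma backward : omega_regular hatH omega etaH -> central_dual J Jinv eta.
Proof.
move=> reg; apply/central_iff => g; rewrite DJL DJR.
have uv : phiL eta J = phiR eta J.
  rewrite phiLJ phiRJ; apply/ffunP=> y; rewrite !ffunE.
  by apply: eq_big_seq => b hb; rewrite reg.
have uv' : phiL eta Jinv = phiR eta Jinv.
  by rewrite -[LHS]conv1r -invR' -uv -convA invL conv1l.
by rewrite uv uv'.
Qed.


Lemma Ecomb (c : {ffun gT -> k} -> k) b0 : b0 \in hatH ->
  conv [ffun y => \sum_(b <- hatH) c b * e b y] (e b0) = [ffun y => c b0 * e b0 y].
Proof.
move=> hb0; have cb0 := proj1 (hatHP b0) hb0; apply/ffunP=> y; rewrite !ffunE.
under eq_bigr => z _ do rewrite ffunE mulr_suml.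
rewrite exchange_big /=.
transitivity (\sum_(b <- hatH) c b * conv (e b) (e b0) y).
  apply: eq_bigr => b _; rewrite ffunE mulr_sumr; apply: eq_bigr => z _; by rewrite mulrA.
rewrite (bigD1_seq b0) //= (conv_e ch0 _ cb0 cb0) eqxx [X in _ + X]big1_seq ?addr0 ?eE //.
move=> b /andP[nb hb]; rewrite (conv_e ch0 _ (proj1 (hatHP b) hb) cb0) (negbTE nb).
by rewrite mulr0.
Qed.

Lemma forward : ('Z([set: gT]) = 1)%g -> central_dual J Jinv eta ->
  omega_regular hatH omega etaH.
Proof.
move=> ZG /central_iff C.
set u := phiL eta J; set u' := phiL eta Jinv; set v := phiR eta J; set v' := phiR eta Jinv.
have eta_nz g : eta g != 0.
  case: leta => e1 eM; apply/eqP => E; have := e1.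
  by rewrite -(mulgV g) eM E mul0r => /eqP; rewrite eq_sym oner_eq0.
have C1 g : conv u' (conv (delta k g) u) = conv v' (conv (delta k g) v).
  have := C g; rewrite DJL DJR !conv_scl !conv_scr => /ffunP E; apply/ffunP => y.
  by have := E y; rewrite !ffunE => /mulfI; apply; exact: eta_nz.
set w := conv u v'.
have Cw g : conv (delta k g) w = conv w (delta k g).
  transitivity (conv (conv (delta k g) u) v'); first by rewrite convA.
  have -> : conv (delta k g) u = conv u (conv v' (conv (delta k g) v)).
    by rewrite -C1 -convA invL' conv1l.
  by rewrite !convA invR' conv1r -convA.
have wcl g y : w (g^-1 * y)%g = w (y * g^-1)%g.
  by have /ffunP/(_ y) := Cw g; rewrite conv_dl conv_dr !ffunE.
pose lam b := omega etaH b / omega b etaH.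
have lamM a b : a \in hatH -> b \in hatH -> lam (chi_mul a b) = lam a * lam b.
  by move=> ha hb; rewrite /lam (lam_mul hatHP coc hetaH ha hb).
have [onz cc] := coc.
have convve b : b \in hatH -> conv v (e b) = [ffun y => omega b etaH * e b y].
  by move=> hb; rewrite /v phiRJ Ecomb.
have convv'e b : b \in hatH -> conv v' (e b) = [ffun y => (omega b etaH)^-1 * e b y].
  move=> hb; have E : e b = [ffun y => omega b etaH * conv v' (e b) y].
    by rewrite -conv_scr -convve // -convA invR conv1l.
  apply/ffunP=> y; rewrite [RHS]ffunE {2}E [in RHS]ffunE mulrA mulVf ?mul1r //.
  by apply: onz; rewrite ?hetaH.
have convwe b : b \in hatH -> conv w (e b) = [ffun y => lam b * e b y].
  move=> hb; rewrite /w convA convv'e // conv_scr /u phiLJ Ecomb //.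
  by apply/ffunP=> y; rewrite !ffunE /lam; ring.
have Ed : delta k 1 = [ffun y => \sum_(b <- hatH) e b y].
  by apply/ffunP=> z; rewrite /delta !ffunE (Esum ch0 hatHP uH cHH).
have wE : forall y, w y = \sum_(b <- hatH) lam b * e b y.
  move=> y; rewrite -[w]conv1r Ed conv_sumr ffunE; apply: eq_big_seq => b hb.
  by rewrite convwe // ffunE.
have GLw x y : w x * w y = if x == y then w x else 0.
  by rewrite !wE; apply: (GL ch0 hatHP uH cHH lamM).
have o1 := one_in hatHP.
have lam1 : lam (chi_one k H) = 1.
  by rewrite /lam (omega_norm hatHP coc hetaH) divff // onz // hetaH.
have /existsP[h0 nzh0] : [exists h, w h != 0].
  apply: contraT; rewrite negb_exists => /forallP W.
  have /ffunP/(_ 1%g) := convwe _ o1; rewrite !ffunE big1 => [|z _]; last first.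
    by rewrite (eqP (negbNE (W z))) mul0r.
  move/esym/eqP; rewrite lam1 mul1r group1 invg1 group1 mulr1 invr_eq0.
  by rewrite (negbTE (nH0 H ch0)).
have w1 : w h0 = 1.
  by apply: (mulfI nzh0); rewrite GLw eqxx mulr1.
have h01 : h0 = 1%g.
  have cent g : commute h0 g.
    have wx : w (g^-1 * h0 * g)%g = 1 by rewrite -mulgA wcl mulgK.
    have := GLw (g^-1 * h0 * g)%g h0; rewrite wx w1 mulr1.
    case: eqP => [E _|_ /eqP]; last by rewrite oner_eq0.
    by rewrite /commute -{2}E -!mulgA mulKVg.
  have : h0 \in ('Z([set: gT]))%g by apply/centerP; split; [rewrite inE | move=> g _; exact: cent].
  by rewrite ZG => /set1gP.
have wz z : z != 1%g -> w z = 0.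
  move=> nz; have := GLw z 1%g; rewrite -h01 w1 mulr1 h01 (negbTE nz) => ->.
  done.
move=> psi hpsi; have cpsi := proj1 (hatHP psi) hpsi.
have /ffunP/(_ 1%g) := convwe _ hpsi; rewrite !ffunE (bigD1 1%g) //= big1 => [|z nz]; last first.
  by rewrite wz ?mul0r.
rewrite -h01 w1 h01 mul1r invg1 mulg1 addr0 (e1 cpsi) group1.
have [_ p1 _] := cpsi; rewrite p1 mulr1 => E.
have L : lam psi = 1.
  by apply: (mulIf (invr_neq0 (nH0 H ch0))); rewrite -E mul1r.
by rewrite -[LHS](divfK (onz _ _ hpsi hetaH)) -/(lam psi) L mul1r.
Qed.

End Main.


Unset Implicit Arguments.

Theorem theorem3p1 (k : closedFieldType) (gT : finGroupType)
    (H : {group gT}) (hatH : seq {ffun gT -> k})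
    (omega : {ffun gT -> k} -> {ffun gT -> k} -> k)
    (Jinv : KG2 k gT) (eta : gT -> k) :
  [pchar k] =i pred0 ->
  ('Z([set: gT]) = 1)%g ->
  fingroup.abelian H ->
  uniq hatH ->
  (forall chi, chi \in hatH <-> is_char H chi) ->
  two_cocycle hatH omega ->
  mul2 Jinv (twistJ H hatH omega) = one2 k gT ->
  mul2 (twistJ H hatH omega) Jinv = one2 k gT ->
  is_lin_char eta ->
  (central_dual (twistJ H hatH omega) Jinv eta <->
     omega_regular hatH omega (restr H eta)) /\
  (omega_nondegenerate H hatH omega ->
     (central_dual (twistJ H hatH omega) Jinv eta <->
        {in H, forall g, eta g = 1})).
Proof.
move=> ch0 ZG cHH uH hatHP coc JL JR leta.
have iff1 : central_dual (twistJ H hatH omega) Jinv eta <->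
     omega_regular hatH omega (restr H eta).
  split; [exact: (forward ch0 cHH uH hatHP coc JL JR leta ZG)
         | exact: (backward ch0 uH hatHP JL JR leta)].
split=> // nd; rewrite iff1; split.
- move=> reg g Hg; have := nd _ (hetaH hatHP leta) reg.
  by move=> /ffunP/(_ g); rewrite !ffunE Hg.
- move=> E1; have -> : restr H eta = chi_one k H.
    by apply/ffunP => g; rewrite !ffunE; case: ifP => // Hg; rewrite E1.
  by move=> psi hpsi; exact: (omega_norm hatHP coc hpsi).
Qed.
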